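(* Let $\lambda$ be a cardinal with $\lambda^{\aleph_0}=\lambda$, let $(\mathscr T,\bar{\mathbf I})$ be a $\lambda^+$-complete tagged tree, and let $g:\mathscr T\to\lambda$. Then there is a tree $\mathscr T^\dagger$ with $(\mathscr T,\bar{\mathbf I})\le^*(\mathscr T^\dagger,\bar{\mathbf I})$ and a function $g^\dagger:\omega\to\lambda$ such that $g(\eta)=g^\dagger(\ell g(\eta))$ for all $\eta\in\mathscr T^\dagger$.
   Context: A tree is a nonempty set $\mathscr T$ of finite sequences of ordinals, closed under initial segments, such that every $\eta\in\mathscr T$ has at least one immediate successor in $\mathscr T$; $\mathrm{Succ}_{\mathscr T}(\eta)=\{\eta^\frown\langle\alpha\rangle:\eta^\frown\langle\alpha\rangle\in\mathscr T\}$; $\ell g(\eta)$ is the length of $\eta$. An ideal on a set $X$ is a family of subsets of $X$ containing all singletons, closed under subsets and finite unions, and not containing $X$; it is $\mu$-complete if closed under unions of fewer than $\mu$ members. A tagged tree is a pair $(\mathscr T,\bar{\mathbf I})$ where $\mathscr T$ is a tree and $\bar{\mathbf I}$ assigns to some (possibly all) $\eta\in\mathscr T$ an ideal $\mathbf I_\eta$ on a set $\mathrm{Dom}(\mathbf I_\eta)\supseteq\mathrm{Succ}_{\mathscr T}(\eta)$; it is $\mu$-complete if every defined $\mathbf I_\eta$ is $\mu$-complete. $\eta$ is a splitting point if $\mathbf I_\eta$ is defined and $\mathrm{Succ}_{\mathscr T}(\eta)\notin\mathbf I_\eta$. For trees $\mathscr T'\subseteq\mathscr T$, $(\mathscr T,\bar{\mathbf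 I})\le^*(\mathscr T',\bar{\mathbf I})$ means: for every $\eta\in\mathscr T'$ which is a splitting point of $(\mathscr T,\bar{\mathbf I})$ we have $\mathrm{Succ}_{\mathscr T'}(\eta)\notin\mathbf I_\eta$. *)

(* Defs.v *)
From Stdlib Require Import List.
Import ListNotations.

Definition is_tree {A : Type} (T : list A -> Prop) : Prop :=
  (exists eta, T eta) /\
  (forall eta nu : list A, T (eta ++ nu) -> T eta) /\
  (forall eta, T eta -> exists a : A, T (eta ++ [a])).

Definition Succ {A : Type} (T : list A -> Prop) (eta : list A) : list A -> Prop :=
  fun x => exists a : A, x = eta ++ [a] /\ T x.

Definition subset {X : Type} (P Q : X -> Prop) : Prop := forall x, P x -> Q x.

Definition is_ideal {X : Type} (D : X -> Prop) (I : (X -> Prop) -> Prop) : Prop :=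
  (forall Y, I Y -> subset Y D) /\
  (forall x, D x -> I (fun y => y = x)) /\
  (forall Y Z, I Z -> subset Y Z -> I Y) /\
  (forall Y Z, I Y -> I Z -> I (fun x => Y x \/ Z x)) /\
  ~ I D.

(* mu-complete with mu = lambda^+, lambda the cardinality of type L:
   closed under unions of families of size < lambda^+, i.e. of size
   <= lambda, i.e. indexed by a type J injecting into L. *)
Definition lambda_plus_complete {X : Type} (L : Type) (I : (X -> Prop) -> Prop) : Prop :=
  forall (J : Type) (f : J -> L), (forall j1 j2, f j1 = f j2 -> j1 = j2) ->
  forall F : J -> (X -> Prop), (forall j, I (F j)) ->
  I (fun x => exists j, F j x).

(* A tagged tree (T, Ibar): Ibar is given by
   - def eta : I_eta is defined,
   - Dom eta : the set Dom(I_eta),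
   - Id eta  : the ideal I_eta (a family of subsets of Dom eta).
   Only its values at defined eta in T matter. *)
Definition is_tagged_tree {A : Type} (T : list A -> Prop)
  (def : list A -> Prop) (Dom : list A -> list A -> Prop)
  (Id : list A -> (list A -> Prop) -> Prop) : Prop :=
  is_tree T /\
  forall eta, T eta -> def eta ->
    is_ideal (Dom eta) (Id eta) /\ subset (Succ T eta) (Dom eta).

Definition tagged_tree_complete {A : Type} (L : Type) (T : list A -> Prop)
  (def : list A -> Prop) (Id : list A -> (list A -> Prop) -> Prop) : Prop :=
  forall eta, T eta -> def eta -> lambda_plus_complete L (Id eta).

Definition splitting_point {A : Type} (T : list A -> Prop)
  (def : list A -> Prop) (Id : list A -> (list A -> Prop) -> Prop)
  (eta : list A) : Prop :=
  T eta /\ def eta /\ ~ Id eta (Succ T eta).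

Definition le_star {A : Type} (T : list A -> Prop)
  (def : list A -> Prop) (Id : list A -> (list A -> Prop) -> Prop)
  (T' : list A -> Prop) : Prop :=
  is_tree T' /\ subset T' T /\
  forall eta, T' eta -> splitting_point T def Id eta -> ~ Id eta (Succ T' eta).

Definition card_pow_omega_eq (L : Type) : Prop :=
  exists (f : (nat -> L) -> L) (h : L -> (nat -> L)),
    (forall s, h (f s) = s) /\ (forall x, f (h x) = x).

(* Main.v *)
Require Import Defs.
From Stdlib Require Import List Lia Arith Classical ClassicalEpsilon.
Import ListNotations.

Inductive badT {A L : Type} (T : list A -> Prop) (def : list A -> Prop)
  (Id : list A -> (list A -> Prop) -> Prop) (g : list A -> L) (h : nat -> L)
  : list A -> Type :=
| bmis : forall eta, g eta <> h (length eta) -> badT T def Id g h eta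
| bsucc : forall eta (Y : list A -> Prop),
    (splitting_point T def Id eta -> Id eta Y) ->
    (~ splitting_point T def Id eta -> forall x, ~ Y x) ->
    (forall a, T (eta ++ [a]) -> ~ Y (eta ++ [a]) -> badT T def Id g h (eta ++ [a])) ->
    badT T def Id g h eta.

Arguments bmis {A L T def Id g h} eta _.
Arguments bsucc {A L T def Id g h} eta Y _ _ _.

Definition inh_get {X : Type} (H : inhabited X) : X :=
  proj1_sig (constructive_indefinite_description (fun _ : X => True)
    (match H with inhabits x => ex_intro _ x I end)).

Definition Yof {A L T def Id g h} {eta : list A}
  (d : @badT A L T def Id g h eta) : list A -> Prop :=
  match d with bmis _ _ => fun _ => False | bsucc _ Y _ _ _ => Y end.

Definition below {A L T def Id g h} (y x : sigT (@badT A L T def Id g h)) : Prop :=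
  match projT2 x with
  | bmis _ _ => False
  | bsucc eta Y _ _ F => exists a Ta nY, y = existT _ (eta ++ [a]) (F a Ta nY)
  end.

Lemma below_acc {A L T def Id g h} (eta : list A) (d : @badT A L T def Id g h eta) :
  Acc below (existT _ eta d).
Proof.
  induction d as [eta Hm | eta Y H1 H2 F IH].
  - constructor; intros y Hy; simpl in Hy; contradiction.
  - constructor; intros y Hy; simpl in Hy.
    destruct Hy as [a [Ta [nY ->]]]. apply IH.
Qed.

Lemma no_chain {A L T def Id g h} (s : nat -> sigT (@badT A L T def Id g h)) :
  (forall n, below (s (S n)) (s n)) -> False.
Proof.
  assert (K : forall x, Acc below x -> forall s : nat -> sigT (@badT A L T def Id g h),
    s 0 = x -> (forall n, below (s (S n)) (s n)) -> False).
  { intros x Hx. induction Hx as [x _ IH]. intros s0 Hs Hc.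
    apply (IH (s0 1) ltac:(rewrite <- Hs; apply Hc) (fun n => s0 (S n))); [reflexivity|].
    intro n. apply Hc. }
  intro Hc. destruct (s 0) as [eta d] eqn:E.
  exact (K _ (below_acc eta d) s E Hc).
Qed.

Lemma prefix_snoc {A : Type} (p q eta : list A) (a : A) :
  p ++ q = eta ++ [a] -> (exists q', eta = p ++ q') \/ p = eta ++ [a].
Proof.
  intro H. destruct (app_eq_app _ _ _ _ H) as [l [[E1 E2] | [E1 E2]]].
  - destruct l as [|b l].
    + left. exists []. rewrite E1. now rewrite !app_nil_r.
    + simpl in E2. injection E2 as -> E3. symmetry in E3.
      apply app_eq_nil in E3. destruct E3 as [-> _]. right; exact E1.
  - left. exists l. exact E1.
Qed.


Lemma good_dir {A L : Type} (T : list A -> Prop) (def : list A -> Prop)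
  (Dom : list A -> list A -> Prop)
  (Id : list A -> (list A -> Prop) -> Prop) (g : list A -> L) (h : nat -> L) :
  is_tagged_tree T def Dom Id ->
  ~ inhabited (badT T def Id g h []) ->
  exists Tdag, le_star T def Id Tdag /\ forall eta, Tdag eta -> g eta = h (length eta).
Proof.
  intros [[[e0 He0] [Hpre Hsucc]] Htag] Hroot.
  set (badP := fun x => inhabited (badT T def Id g h x)).
  assert (Ga : forall eta, ~ badP eta -> g eta = h (length eta)).
  { intros eta nb. apply NNPP; intro Hn. apply nb. constructor. now apply bmis. }
  assert (Gc : forall eta, ~ badP eta -> splitting_point T def Id eta ->
     ~ Id eta (fun x => Succ T eta x /\ ~ badP x)).
  { intros eta nb S HG. apply nb. constructor.
    apply (bsucc eta (fun x => Succ T eta x /\ ~ badP x)).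
    - intros _; exact HG.
    - intros ns; contradiction.
    - intros a Ta nG. apply inh_get. apply NNPP. intro nb'. apply nG.
      split; [exists a; split; auto | exact nb']. }
  assert (Gb : forall eta, ~ badP eta -> ~ splitting_point T def Id eta ->
     exists a, T (eta ++ [a]) /\ ~ badP (eta ++ [a])).
  { intros eta nb ns. apply NNPP; intro Hn. apply nb. constructor.
    apply (bsucc eta (fun _ => False)).
    - intro; contradiction.
    - intros _ x Hx; exact Hx.
    - intros a Ta _. apply inh_get. apply NNPP. intro nb'. apply Hn. eauto. }
  set (Tdag := fun eta => forall p q, eta = p ++ q -> T p /\ ~ badP p).
  assert (Text : forall eta a, Tdag eta -> T (eta ++ [a]) -> ~ badP (eta ++ [a]) ->
     Tdag (eta ++ [a])).
  { intros eta a Hd Ta nb p q E. destruct (prefix_snoc p q eta a (eq_sym E)) as [[q' Eq] | Ep].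
    - exact (Hd p q' Eq).
    - subst p; auto. }
  assert (Tself : forall eta, Tdag eta -> T eta /\ ~ badP eta).
  { intros eta Hd. apply (Hd eta []). now rewrite app_nil_r. }
  assert (Ideal : forall eta, splitting_point T def Id eta -> is_ideal (Dom eta) (Id eta)
       /\ subset (Succ T eta) (Dom eta)).
  { intros eta [Te [De _]]. now apply Htag. }
  exists Tdag. split; [split; [|split] | ].
  - split; [|split].
    + exists []. intros p q E. symmetry in E. apply app_eq_nil in E. destruct E as [-> _].
      split; [ apply (Hpre [] e0); exact He0 | exact Hroot ].
    + intros eta nu Hd p q E. apply (Hd p (q ++ nu)). rewrite E. now rewrite app_assoc.
    + intros eta Hd. destruct (Tself eta Hd) as [Te nb].
      destruct (classic (splitting_point T def Id eta)) as [S | ns].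
      * assert (Hex : exists x, Succ T eta x /\ ~ badP x).
        { apply NNPP; intro Hn. apply (Gc eta nb S).
          destruct (Ideal eta S) as [[Hsub [Hsing [Hcl _]]] HD].
          destruct (Hsucc eta Te) as [a0 Ta0].
          apply (Hcl _ (fun y => y = eta ++ [a0])).
          - apply Hsing. apply HD. exists a0; auto.
          - intros x Hx. exfalso; apply Hn; eauto. }
        destruct Hex as [x [[a [-> Ta]] nbx]]. exists a. now apply Text.
      * destruct (Gb eta nb ns) as [a [Ta nba]]. exists a. now apply Text.
  - intros eta Hd. apply (Tself eta Hd).
  - intros eta Hd S HI. destruct (Tself eta Hd) as [Te nb]. apply (Gc eta nb S).
    destruct (Ideal eta S) as [[Hsub [Hsing [Hcl _]]] HD].
    apply (Hcl _ _ HI). intros x [[a [-> Ta]] nbx]. exists a. split; auto.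
  - intros eta Hd. apply Ga. apply (Tself eta Hd).
Qed.

Definition agree {A L : Type} (g : list A -> L) (h : nat -> L) (eta : list A) : Prop :=
  forall k, k < length eta -> h k = g (firstn k eta).

Lemma agree_prefix {A L} (g : list A -> L) h eta a :
  agree g h (eta ++ [a]) -> agree g h eta.
Proof.
  intros H k Hk. rewrite H by (rewrite length_app; simpl; lia).
  rewrite firstn_app. replace (k - length eta) with 0 by lia. simpl. now rewrite app_nil_r.
Qed.

Lemma agree_last {A L} (g : list A -> L) h eta a :
  agree g h (eta ++ [a]) -> h (length eta) = g eta.
Proof.
  intros H. rewrite H by (rewrite length_app; simpl; lia).
  rewrite firstn_app, Nat.sub_diag, firstn_all. simpl. now rewrite app_nil_r.
Qed.

Lemma below_exists {A L T def Id g h} (eta : list A) (d : @badT A L T def Id g h eta) :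
  forall a, g eta = h (length eta) -> T (eta ++ [a]) -> ~ Yof d (eta ++ [a]) ->
  exists d', below (existT _ (eta ++ [a]) d') (existT _ eta d).
Proof.
  destruct d as [eta Hm | eta Y H1 H2 F]; intros a E Ta nY.
  - exfalso; auto.
  - exists (F a Ta nY). simpl. exists a, Ta, nY. reflexivity.
Qed.

Lemma Yof_id {A L T def Id g h} (eta : list A) (d : @badT A L T def Id g h eta) :
  splitting_point T def Id eta -> g eta = h (length eta) -> Id eta (Yof d).
Proof. destruct d; simpl; intros S E; [exfalso; auto | auto]. Qed.

Lemma Yof_empty {A L T def Id g h} (eta : list A) (d : @badT A L T def Id g h eta) :
  ~ splitting_point T def Id eta -> g eta = h (length eta) -> forall x, ~ Yof d x.
Proof. destruct d; simpl; intros S E; [exfalso; auto | auto]. Qed.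

Record St {A L : Type} (T : list A -> Prop) (def : list A -> Prop)
  (Id : list A -> (list A -> Prop) -> Prop) (g : list A -> L) := mkSt
  { st_eta : list A; st_T : T st_eta;
    st_D : forall h, agree g h st_eta -> badT T def Id g h st_eta }.
Arguments mkSt {A L T def Id g}.
Arguments st_eta {A L T def Id g}.
Arguments st_T {A L T def Id g}.
Arguments st_D {A L T def Id g}.

Lemma step_ex {A L : Type} (T : list A -> Prop) (def : list A -> Prop)
  (Dom : list A -> list A -> Prop)
  (Id : list A -> (list A -> Prop) -> Prop) (g : list A -> L)
  (f : (nat -> L) -> L) (hinv : L -> nat -> L) :
  (forall s, hinv (f s) = s) ->
  is_tagged_tree T def Dom Id -> tagged_tree_complete L T def Id ->
  forall s : St T def Id g,
  exists a, T (st_eta s ++ [a]) /\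
    forall h (p' : agree g h (st_eta s ++ [a])),
    exists d', below (existT _ (st_eta s ++ [a]) d')
                     (existT _ (st_eta s) (st_D s h (agree_prefix g h _ a p'))).
Proof.
  intros Hf [[_ [_ Hsucc]] Htag] Hcomp [eta Te D]. simpl.
  set (U := fun x => exists h (p : agree g h eta), h (length eta) = g eta /\ Yof (D h p) x).
  assert (Hex : exists a, T (eta ++ [a]) /\ ~ U (eta ++ [a])).
  { destruct (classic (splitting_point T def Id eta)) as [S | ns].
    - destruct S as [Te' [De nS]].
      destruct (Htag eta Te De) as [[Hsub [Hsing [Hcl _]]] HD].
      set (J := {h : nat -> L | agree g h eta /\ h (length eta) = g eta}).
      set (fJ := fun j : J => f (proj1_sig j)).
      assert (Hinj : forall j1 j2, fJ j1 = fJ j2 -> j1 = j2).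
      { intros [h1 p1] [h2 p2] E. unfold fJ in E; simpl in E.
        assert (h1 = h2) by (rewrite <- (Hf h1), <- (Hf h2), E; reflexivity).
        subst h2. f_equal. apply proof_irrelevance. }
      set (F := fun j : J => Yof (D (proj1_sig j) (proj1 (proj2_sig j)))).
      assert (HU : Id eta (fun x => exists j, F j x)).
      { apply (Hcomp eta Te De J fJ Hinj F). intros [h [p E]]. unfold F; simpl.
        apply Yof_id; [split; auto | auto]. }
      apply NNPP; intro Hn. apply nS. apply (Hcl _ _ HU).
      intros x [a [-> Ta]]. apply NNPP; intro nx. apply Hn. exists a. split; auto.
      intros [h [p [E Y]]]. apply nx. exists (exist _ h (conj p E)). unfold F; simpl. rewrite (proof_irrelevance _ (proj1 (conj p E)) p). exact Y.
    - destruct (Hsucc eta Te) as [a Ta]. exists a. split; auto.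
      intros [h [p [E Y]]]. exact (Yof_empty eta (D h p) ns (eq_sym E) _ Y). }
  destruct Hex as [a [Ta nU]]. exists a. split; auto.
  intros h p'. apply below_exists; auto.
  - symmetry. exact (agree_last g h eta a p').
  - intro Y. apply nU. exists h, (agree_prefix g h eta a p'). split; auto.
    exact (agree_last g h eta a p').
Qed.

Definition step {A L : Type} {T : list A -> Prop} {def : list A -> Prop}
  {Id : list A -> (list A -> Prop) -> Prop} {g : list A -> L}
  (Hs : forall s : St T def Id g,
    exists a, T (st_eta s ++ [a]) /\
    forall h (p' : agree g h (st_eta s ++ [a])),
    exists d', below (existT _ (st_eta s ++ [a]) d')
                     (existT _ (st_eta s) (st_D s h (agree_prefix g h _ a p'))))
  (s : St T def Id g) : St T def Id g :=
  match constructive_indefinite_description _ (Hs s) with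
  | exist _ a Ha => mkSt (st_eta s ++ [a]) (proj1 Ha)
      (fun h p' => proj1_sig (constructive_indefinite_description _ (proj2 Ha h p')))
  end.

Lemma step_eta {A L T def Id g} Hs (s : @St A L T def Id g) :
  exists a, st_eta (step Hs s) = st_eta s ++ [a].
Proof.
  unfold step. destruct (constructive_indefinite_description _ (Hs s)) as [a Ha].
  simpl. eauto.
Qed.

Lemma step_below {A L T def Id g} Hs (s : @St A L T def Id g) h
  (p' : agree g h (st_eta (step Hs s))) (q : agree g h (st_eta s)) :
  below (existT _ (st_eta (step Hs s)) (st_D (step Hs s) h p'))
        (existT _ (st_eta s) (st_D s h q)).
Proof.
  revert p'. unfold step. destruct (constructive_indefinite_description _ (Hs s)) as [a Ha].
  simpl. intro p'.
  destruct (constructive_indefinite_description _ (proj2 Ha h p')) as [d' Hd']. simpl.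
  rewrite (proof_irrelevance _ q (agree_prefix g h (st_eta s) a p')). exact Hd'.
Qed.

Theorem mainTheorem2 (A : Type) (L : Type)
  (T : list A -> Prop) (def : list A -> Prop) (Dom : list A -> list A -> Prop)
  (Id : list A -> (list A -> Prop) -> Prop) (g : list A -> L) :
  card_pow_omega_eq L ->
  is_tagged_tree T def Dom Id ->
  tagged_tree_complete L T def Id ->
  exists (Tdag : list A -> Prop) (gdag : nat -> L),
    le_star T def Id Tdag /\
    forall eta, Tdag eta -> g eta = gdag (length eta).
Proof.
  intros [f [hinv [Hf _]]] Htt Hcomp.
  destruct (classic (exists h, ~ inhabited (badT T def Id g h []))) as [[h Hh]|Hn].
  - destruct (good_dir T def Dom Id g h Htt Hh) as [Tdag [H1 H2]]. exists Tdag, h. auto.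
  - exfalso.
    assert (Hall : forall h, badT T def Id g h []).
    { intro h. apply inh_get. apply NNPP. intro nb. apply Hn. eauto. }
    assert (T0 : T []).
    { destruct Htt as [[[e0 He0] [Hpre _]] _]. apply (Hpre [] e0). exact He0. }
    set (s0 := mkSt (def:=def) (Id:=Id) (g:=g) [] T0 (fun h _ => Hall h)).
    pose proof (step_ex T def Dom Id g f hinv Hf Htt Hcomp) as Hs.
    set (seq := fix seq n := match n with 0 => s0 | S n => step Hs (seq n) end).
    assert (Hlen : forall n, length (st_eta (seq n)) = n).
    { induction n as [|n IH]; [reflexivity|].
      simpl. destruct (step_eta Hs (seq n)) as [a E]. rewrite E, length_app, IH. simpl. lia. }
    assert (Hfirst : forall n k, k <= n -> firstn k (st_eta (seq n)) = st_eta (seq k)).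
    { induction n as [|n IH]; intros k Hk.
      - replace k with 0 by lia. reflexivity.
      - destruct (Nat.eq_dec k (S n)) as [-> | Hne].
        + rewrite <- (Hlen (S n)) at 1. apply firstn_all.
        + change (seq (S n)) with (step Hs (seq n)).
          destruct (step_eta Hs (seq n)) as [a E]. rewrite E, firstn_app, Hlen.
          replace (k - n) with 0 by lia. simpl. rewrite app_nil_r. apply IH. lia. }
    set (hs := fun k => g (st_eta (seq k))).
    assert (Hag : forall n, agree g hs (st_eta (seq n))).
    { intros n k Hk. rewrite Hlen in Hk. unfold hs. rewrite Hfirst by lia. reflexivity. }
    apply (no_chain (fun n => existT _ (st_eta (seq n)) (st_D (seq n) hs (Hag n)))).
    intro n. exact (step_below Hs (seq n) hs (Hag (S n)) (Hag n)).
Qed.
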